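(* Let $\{p(\bm x,\bm\theta)\}$ be a regular parametric family on $\mathbb R^d$ with parameter $\bm\theta\in\mathbb R^m$, with Wasserstein scores $S^W_j$ and Wasserstein information matrix $G_W(\bm\theta)$ assumed invertible. Let $\hat{\bm\theta}:\mathbb R^d\to\mathbb R^m$ be a differentiable estimator with $\nabla_{\bm x}\hat\theta_i$ square integrable under $p(\cdot,\bm\theta)$, such that $\frac{\partial}{\partial\theta_j}\mathrm E_\theta[\hat\theta_i]=\int\hat\theta_i\,\partial_{\theta_j}p\,d\bm x$ and $\int\nabla_{\bm x}\cdot(\hat\theta_i\,p\,\nabla_{\bm x}S^W_j)\,d\bm x=0$ for all $i,j$. Then, in the positive semidefinite order, $$\mathrm{Var}^W_\theta[\hat{\bm\theta}]\succeq\Big(\tfrac{\partial}{\partial\theta}\mathrm E_\theta[\hat{\bm\theta}]\Big)^{\!\top}G_W(\bm\theta)^{-1}\Big(\tfrac{\partial}{\partial\theta}\mathrm E_\theta[\hat{\bm\theta}]\Big),$$ where $\big(\tfrac{\partial}{\partial\theta}\mathrm E_\theta[\hat{\bm\theta}]\big)_{ab}=\frac{\partial}{\partial\theta_b}\mathrm E_\theta[\hat\theta_a]$.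
   Context: The Wasserstein score $S^W_j(\bm x,\bm\theta)$ is the solution of $\nabla_{\bm x}\cdot(p(\bm x,\bm\theta)\nabla_{\bm x}S^W_j)=-\partial_{\theta_j}p(\bm x,\bm\theta)$ with $\mathrm E_\theta[S^W_j]=0$. The Wasserstein information matrix is $G_W(\bm\theta)_{ij}=\mathrm E_\theta[\nabla_{\bm x}S^W_i{}^\top\nabla_{\bm x}S^W_j]$. The Wasserstein covariance of $\hat{\bm\theta}$ is $\mathrm{Var}^W_\theta[\hat{\bm\theta}]_{ab}=\mathrm E_\theta[(\nabla_{\bm x}\hat\theta_a)^\top(\nabla_{\bm x}\hat\theta_b)]$. *)

(* Defs.v *)
From HB Require Import structures.
From mathcomp Require Import all_boot all_order all_algebra.
From mathcomp Require Import all_classical all_reals all_analysis.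

Set Implicit Arguments.
Unset Strict Implicit.
Unset Printing Implicit Defensive.

Import Order.TTheory GRing.Theory Num.Theory.
Import numFieldNormedType.Exports.
Local Open Scope classical_set_scope.
Local Open Scope ring_scope.

Section WassersteinDefs.
Variable R : realType.

Definition ebasis (n : nat) (k : 'I_n) : 'rV[R]_n := delta_mx 0 k.

Definition partial (n : nat) (f : 'rV[R]_n -> R) (k : 'I_n) (x : 'rV[R]_n) : R :=
  'D_(ebasis k) f x.

Definition grad (n : nat) (f : 'rV[R]_n -> R) (x : 'rV[R]_n) : 'rV[R]_n :=
  \row_k partial f k x.

Definition div (n : nat) (F : 'rV[R]_n -> 'rV[R]_n) (x : 'rV[R]_n) : R :=
  \sum_(k < n) partial (fun y => F y 0 k) k x.

Definition dotv (n : nat) (u v : 'rV[R]_n) : R := \sum_(k < n) u 0 k * v 0 k.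

Definition box (n : nat) (a b : 'rV[R]_n) : set 'rV[R]_n :=
  [set x | forall k, a 0 k < x 0 k <= b 0 k].

Definition boxes (n : nat) : set (set 'rV[R]_n) :=
  [set B | exists a b, B = box a b].

(* R^n with its Borel sigma-algebra (generated by the half-open boxes) *)
Definition Rn (n : nat) := g_sigma_algebraType (@boxes n).

(* mu is Lebesgue measure on R^n: it gives every box its volume
   (this characterizes Lebesgue measure on the Borel sets) *)
Definition is_lebesgue (n : nat) (mu : {measure set (Rn n) -> \bar R}) : Prop :=
  forall a b : 'rV[R]_n, (forall k, a 0 k <= b 0 k) ->
    mu (box a b) = (\prod_(k < n) (b 0 k - a 0 k))%:E.

Definition expect (d m : nat) (mu : {measure set (Rn d) -> \bar R})
  (p : 'rV[R]_d -> 'rV[R]_m -> R) (th : 'rV[R]_m) (f : 'rV[R]_d -> R) : R :=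
  Rintegral mu setT (fun x : Rn d => f x * p x th).

Definition WinfoMx (d m : nat) (mu : {measure set (Rn d) -> \bar R})
  (p : 'rV[R]_d -> 'rV[R]_m -> R) (th : 'rV[R]_m)
  (S : 'I_m -> 'rV[R]_d -> R) : 'M[R]_m :=
  \matrix_(i, j) expect mu p th (fun x => dotv (grad (S i) x) (grad (S j) x)).

Definition WVar (d m : nat) (mu : {measure set (Rn d) -> \bar R})
  (p : 'rV[R]_d -> 'rV[R]_m -> R) (th : 'rV[R]_m)
  (that : 'rV[R]_d -> 'rV[R]_m) : 'M[R]_m :=
  \matrix_(a, b) expect mu p th
     (fun x => dotv (grad (fun y => that y 0 a) x) (grad (fun y => that y 0 b) x)).

Definition dExpect (d m : nat) (mu : {measure set (Rn d) -> \bar R})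
  (p : 'rV[R]_d -> 'rV[R]_m -> R) (th : 'rV[R]_m)
  (that : 'rV[R]_d -> 'rV[R]_m) : 'M[R]_m :=
  \matrix_(a, b) 'D_(ebasis b) (fun t => expect mu p t (fun y => that y 0 a)) th.

Definition psd_ge (m : nat) (A B : 'M[R]_m) : Prop :=
  forall v : 'cV[R]_m, 0 <= (v^T *m (A - B) *m v) 0 0.

End WassersteinDefs.

Arguments ebasis {R n}.

(* Main.v *)
Require Import Defs.
From HB Require Import structures.
From mathcomp Require Import all_boot all_order all_algebra.
From mathcomp Require Import all_classical all_reals all_analysis.
From mathcomp Require Import lra ring measurable_realfun.
Import Order.TTheory GRing.Theory Num.Theory.
Import numFieldNormedType.Exports.
Local Open Scope classical_set_scope.
Local Open Scope ring_scope.

Lemma coord_diff (R : realType) n q (F : 'rV[R]_n -> 'rV[R]_q) k x :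
  differentiable F x -> differentiable (fun y => F y 0 k) x.
Proof.
move=> dF.
exact: (@differentiable_comp _ _ _ _ F (fun N : 'rV[R]_q => N 0 k) x dF (differentiable_coord _ _ _)).
Qed.

Lemma div_scale (R : realType) n (t : 'rV[R]_n -> R) (G : 'rV[R]_n -> 'rV[R]_n) x :
  differentiable t x -> differentiable G x ->
  div (fun y => t y *: G y) x = t x * div G x + dotv (grad t x) (G x).
Proof.
move=> dt dG.
rewrite /div /dotv mulr_sumr -big_split; apply: eq_bigr => k _ /=.
rewrite /partial.
have -> : (fun y => (t y *: G y) 0 k) = t * (fun y => G y 0 k).
  by apply/funext => y; rewrite !mxE.
rewrite deriveM; last 2 first.
- exact: diff_derivable.
- exact/diff_derivable/coord_diff.
by rewrite /grad !mxE /partial [X in _ + X]mulrC.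
Qed.


Lemma dotvC (R : realType) n (a b : 'rV[R]_n) : dotv a b = dotv b a.
Proof. by rewrite /dotv; apply: eq_bigr => k _; rewrite mulrC. Qed.

Lemma dotvZr (R : realType) n (a b : 'rV[R]_n) (c : R) : dotv a (c *: b) = c * dotv a b.
Proof. by rewrite /dotv mulr_sumr; apply: eq_bigr => k _; rewrite mxE mulrCA. Qed.

#[local] Hint Resolve measurableT : core.
Section Gram.
Context (dd : measure_display) (T : measurableType dd) (R : realType)
  (mu : {measure set T -> \bar R}).

Lemma Rint_sum (I : Type) (s : seq I) (h : I -> T -> R) :
  (forall i, mu.-integrable setT (EFin \o h i)) ->
  \int[mu]_(x in setT) (\sum_(i <- s) h i x) = \sum_(i <- s) \int[mu]_(x in setT) h i x.
Proof.
move=> hi; elim: s => [|i s IH].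
  under eq_Rintegral do rewrite big_nil.
  by rewrite big_nil Rintegral_cst ?mul0r //; exact: measurableT.
under eq_Rintegral do rewrite big_cons.
rewrite big_cons RintegralD // ?IH //.
rewrite (_ : _ \o _ = (fun x => \sum_(i <- s) (h i x)%:E)); last first.
  by apply/funext => x /=; rewrite sumEFin.
by apply: (integrable_sum measurableT) => j _; exact: hi.
Qed.

Lemma int_scale (c : R) (f : T -> R) : mu.-integrable setT (fun x => (f x)%:E) ->
  mu.-integrable setT (fun x => (c * f x)%:E).
Proof.
move=> H; apply: (eq_integrable measurableT _ _ _ (integrableZl measurableT c H)) => x _ /=.
by rewrite EFinM.
Qed.

Lemma dot_bound n (a b : 'rV[R]_n) : `|dotv a b| <= dotv a a + dotv b b.
Proof.
rewrite /dotv -big_split /=; apply: (le_trans (ler_norm_sum _ _ _)).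
apply: ler_sum => k _; rewrite normrM.
have Ha : a 0 k * a 0 k = `|a 0 k| * `|a 0 k|.
  by rewrite -normrM ger0_norm // -expr2 sqr_ge0.
have Hb : b 0 k * b 0 k = `|b 0 k| * `|b 0 k|.
  by rewrite -normrM ger0_norm // -expr2 sqr_ge0.
rewrite Ha Hb; have := normr_ge0 (a 0 k); have := normr_ge0 (b 0 k); nra.
Qed.

Lemma dot_ge0 n (a : 'rV[R]_n) : 0 <= dotv a a.
Proof. by apply: sumr_ge0 => k _; rewrite -expr2 sqr_ge0. Qed.

Variables (d n : nat) (p0 : T -> R) (g : 'I_n -> T -> 'rV[R]_d).
Hypotheses (Hp0 : forall x, 0 <= p0 x) (mp0 : measurable_fun setT p0)
  (mg : forall i k, measurable_fun setT (fun x => g i x 0 k))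
  (ig : forall i, mu.-integrable setT (fun x => (dotv (g i x) (g i x) * p0 x)%:E)).

Lemma meas_dot i j : measurable_fun setT (fun x => dotv (g i x) (g j x) * p0 x).
Proof.
apply: measurable_realfun.measurable_funM => //; rewrite /dotv.
by apply: measurable_sum => k; apply: measurable_realfun.measurable_funM.
Qed.

Lemma int_dot i j : mu.-integrable setT (fun x => (dotv (g i x) (g j x) * p0 x)%:E).
Proof.
apply: (le_integrable measurableT _ _ (integrableD measurableT (ig i) (ig j))).
  exact/measurable_EFinP/meas_dot.
move=> x _ /=.
rewrite lee_fin -mulrDl [X in _ <= X]ger0_norm; last by rewrite mulr_ge0 // addr_ge0 // dot_ge0.
by rewrite normrM (ger0_norm (Hp0 x)) ler_wpM2r // dot_bound.
Qed.

Definition gramMx : 'M[R]_n :=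
  \matrix_(i, j) \int[mu]_(x in setT) (dotv (g i x) (g j x) * p0 x).

Lemma gram_psd (w : 'cV[R]_n) : 0 <= (w^T *m gramMx *m w) 0 0.
Proof.
have -> : (w^T *m gramMx *m w) 0 0 = \int[mu]_(x in setT)
   (\sum_j \sum_i (w i 0 * w j 0) * (dotv (g i x) (g j x) * p0 x)).
  rewrite Rint_sum; last first.
    move=> j; rewrite (_ : _ \o _ = (fun x => \sum_i ((w i 0 * w j 0) * (dotv (g i x) (g j x) * p0 x))%:E)); last first.
      by apply/funext => x /=; rewrite sumEFin.
    by apply: (integrable_sum measurableT) => i _; apply: int_scale; exact: int_dot.
  rewrite mxE; apply: eq_bigr => j _; rewrite Rint_sum; last first.
    by move=> i; apply: int_scale; exact: int_dot.
  rewrite mxE mulr_suml; apply: eq_bigr => i _.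
  rewrite !mxE RintegralZl //; last exact: int_dot.
  by rewrite mulrAC.
apply: Rintegral_ge0 => x _.
have -> : \sum_j \sum_i (w i 0 * w j 0) * (dotv (g i x) (g j x) * p0 x)
  = dotv (\sum_i w i 0 *: g i x) (\sum_i w i 0 *: g i x) * p0 x.
  transitivity (\sum_j \sum_i \sum_k (w i 0 * g i x 0 k) * (w j 0 * g j x 0 k) * p0 x).
    apply: eq_bigr => j _; apply: eq_bigr => i _.
    rewrite /dotv mulr_suml mulr_sumr; apply: eq_bigr => k _; ring.
  under eq_bigr do rewrite exchange_big /=.
  rewrite exchange_big /= /dotv mulr_suml; apply: eq_bigr => k _.
  rewrite !summxE big_distrlr /= mulr_suml exchange_big /=; apply: eq_bigr => j _.
  rewrite mulr_suml; apply: eq_bigr => i _; rewrite !mxE; ring.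
by rewrite mulr_ge0 // dot_ge0.
Qed.
End Gram.

Lemma schur (R : comUnitRingType) m (A D G : 'M[R]_m) (v : 'cV[R]_m) :
  G^T = G -> G \in unitmx ->
  (col_mx v (- (invmx G *m D^T *m v)))^T *m block_mx A D D^T G
     *m col_mx v (- (invmx G *m D^T *m v))
  = v^T *m (A - D *m invmx G *m D^T) *m v.
Proof.
move=> GT Gu.
set Gi := invmx G.
have GiT : Gi^T = Gi by rewrite /Gi trmx_inv GT.
rewrite tr_col_mx mul_row_block mul_row_col.
rewrite !linearN /= !trmx_mul trmxK GiT.
have E : v^T *m D *m Gi *m G = v^T *m D.
  by rewrite -!mulmxA mulVmx ?mulmx1.
rewrite !mulNmx !mulmxA E.
rewrite mulmxDl mulmxBr mulmxBl mulmxDl !mulNmx !mulmxA.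
by rewrite subrr mul0mx subr0 mulmxBl.
Qed.

Theorem mainTheorem7 (R : realType) (d m : nat)
  (mu : {measure set (Rn R d) -> \bar R}) (Hmu : is_lebesgue mu)
  (p : 'rV[R]_d -> 'rV[R]_m -> R) (th0 : 'rV[R]_m)
  (S : 'I_m -> 'rV[R]_d -> R) (that : 'rV[R]_d -> 'rV[R]_m)
  (* regular parametric family of densities *)
  (Hp0 : forall x th, 0 <= p x th)
  (Hp1 : forall th, mu.-integrable setT (fun x : Rn R d => (p x th)%:E) /\
                    Rintegral mu setT (fun x : Rn R d => p x th) = 1)
  (Hpth : forall x j, derivable (p x) th0 (ebasis j))
  (* S j is the j-th Wasserstein score at th0 *)
  (HSdiff : forall j x, differentiable (S j) x)
  (HSflux : forall j x, differentiable (fun y => p y th0 *: grad (S j) y) x)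
  (HSpde : forall j x, div (fun y => p y th0 *: grad (S j) y) x
                       = - 'D_(ebasis j) (p x) th0)
  (HSmean : forall j, mu.-integrable setT (fun x : Rn R d => (S j x * p x th0)%:E) /\
                      expect mu p th0 (S j) = 0)
  (HSmeas : forall j k, measurable_fun setT (fun x : Rn R d => partial (S j) k x))
  (HS2 : forall j, mu.-integrable setT
           (fun x : Rn R d => (dotv (grad (S j) x) (grad (S j) x) * p x th0)%:E))
  (HG : WinfoMx mu p th0 S \in unitmx)
  (* the estimator *)
  (Hthdiff : forall x, differentiable that x)
  (Hthmeas : forall i k, measurable_fun setT
                (fun x : Rn R d => partial (fun y => that y 0 i) k x))
  (Hth2 : forall i, mu.-integrable setT
           (fun x : Rn R d => (dotv (grad (fun y => that y 0 i) x)
                                   (grad (fun y => that y 0 i) x) * p x th0)%:E))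
  (HthE : forall i th, mu.-integrable setT (fun x : Rn R d => (that x 0 i * p x th)%:E))
  (Hswap : forall i j,
     mu.-integrable setT
       (fun x : Rn R d => (that x 0 i * 'D_(ebasis j) (p x) th0)%:E) /\
     derivable (fun t => expect mu p t (fun y => that y 0 i)) th0 (ebasis j) /\
     'D_(ebasis j) (fun t => expect mu p t (fun y => that y 0 i)) th0
       = Rintegral mu setT (fun x : Rn R d => that x 0 i * 'D_(ebasis j) (p x) th0))
  (Hbdry : forall i j,
     mu.-integrable setT
       (fun x : Rn R d => (div (fun y => (that y 0 i * p y th0) *: grad (S j) y) x)%:E) /\
     Rintegral mu setT
       (fun x : Rn R d => div (fun y => (that y 0 i * p y th0) *: grad (S j) y) x) = 0) :
  psd_ge (WVar mu p th0 that)
    (dExpect mu p th0 that *m invmx (WinfoMx mu p th0 S) *m (dExpect mu p th0 that)^T).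
Proof.
rewrite /psd_ge => v.
set D := dExpect mu p th0 that.
set W := WinfoMx mu p th0 S.
set V := WVar mu p th0 that.
have WT : W^T = W.
  apply/matrixP => i j; rewrite !mxE /expect.
  by apply: eq_Rintegral => x _; rewrite dotvC.
have key a b : D a b = \int[mu]_(x in setT)
    (dotv (grad (fun y => that y 0 a) x) (grad (S b) x) * p x th0).
  rewrite /D /dExpect mxE.
  case: (Hswap a b) => Hi [_ ->].
  case: (Hbdry a b) => Hbi Hb0.
  have pw : forall x : Rn R d, dotv (grad (fun y => that y 0 a) x) (grad (S b) x) * p x th0
     = div (fun y => (that y 0 a * p y th0) *: grad (S b) y) x
       + that x 0 a * 'D_(ebasis b) (p x) th0.
    move=> x.
    have -> : (fun y => (that y 0 a * p y th0) *: grad (S b) y)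
        = (fun y => that y 0 a *: (p y th0 *: grad (S b) y)).
      by apply/funext => y; rewrite scalerA.
    rewrite div_scale; last first.
    - exact: (HSflux b x).
    - exact: (@coord_diff R d m that a x (Hthdiff x)).
    rewrite (_ : div _ x = - 'D_(ebasis b) (p x) th0); last exact: HSpde.
    rewrite dotvZr; ring.
  under eq_Rintegral do rewrite pw.
  rewrite RintegralD; [|exact: measurableT|exact: Hbi|exact: Hi].
  by rewrite Hb0 add0r.
rewrite -(@schur _ _ V D W v WT HG).
pose g := fun k : 'I_(m + m) => match fintype.split k with
  | inl a => grad (fun y => that y 0 a) | inr j => grad (S j) end.
pose p0 := fun x : Rn R d => p x th0.
have -> : block_mx V D D^T W = @gramMx _ _ _ mu _ _ p0 g.
  apply/matrixP => i j; rewrite /gramMx /g /p0 !mxE.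
  case: (fintype.split i) => a; rewrite !mxE; case: (fintype.split j) => b; rewrite !mxE //.
  - by transitivity (D a b); [rewrite /D /dExpect mxE | exact: key].
  - transitivity (D b a); first by rewrite /D /dExpect mxE.
    by rewrite key; apply: eq_Rintegral => x _; rewrite dotvC.
apply: gram_psd.
- by move=> x; exact: Hp0.
- apply/measurable_EFinP; exact: (measurable_int mu (Hp1 th0).1).
- move=> i k; rewrite /g; case: (fintype.split i) => a.
    by apply: (eq_measurable_fun _ _ (Hthmeas a k)) => x _; rewrite mxE.
  by apply: (eq_measurable_fun _ _ (HSmeas a k)) => x _; rewrite mxE.
- move=> i; rewrite /g /p0; case: (fintype.split i) => a; [exact: Hth2|exact: HS2].
Qed.
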